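(* Let $\sigma$ be a signature containing $\triangleright$, let $\mathcal{A}$ be a $\sigma$-algebra and let $\theta$ be a representation of $\mathcal{A}$ by partial functions. Then $\theta$ is atomic if and only if $\theta$ is locally complete.
   Context: Signatures $\sigma$ are sets of operation symbols drawn from: $\triangleright$ (antidomain restriction), $;$ (composition), $\wedge$ (intersection), $\mathrm{upd}$ (update), $\sqcup$ (preferential union), $\mathsf{D}$ (domain), $\mathsf{A}$ (antidomain), interpreted on partial functions as: $f \triangleright g = \{(x,y) \in g : x \notin \mathrm{dom}(f)\}$; $f;g$ = relational composition ($f$ first); $f\wedge g = f\cap g$; $\mathrm{upd}(f,g)(x)$ is $f(x)$ if $f(x)$ defined and $g(x)$ undefined, $g(x)$ if both defined, undefined otherwise; $(f\sqcup g)(x)$ is $f(x)$ if defined, else $g(x)$; $\mathsf{D}(f)$ = identity on $\mathrm{dom}(f)$; $\mathsf{A}(f)$ = identity on the complement of $\mathrm{dom}(f)$ in the base. A representation by partial functions is an isomorphism onto a $\sigma$-algebra of partial functions with these operations. Define $0 := a\triangleright a$, $a\lhd b := (a\triangleright b)\triangleright b$, $a \le b :\iff a\lhd b = a$; for representable algebras this is a partial order with least element $0$ and $a\le b \iff \theta(a)\subseteq\theta(b)$. An atom is a minimal nonzero element; $\mathrm{At}(\mathcal{A})$ is the set of atoms. $\theta$ is atomic if whenever $(x,y)\in\theta(a)$ there is an atom $b\le a$ with $(x,y)\in\theta(b)$. For $a\in\mathcal{A}$, ${\downarrow}a=\{b:b\le a\}$ is a Boolean algebra with bottom $0$, top $a$,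 meet $\lhd$ and complement $b\mapsto b\triangleright a$, and $\theta$ restricts to a representation of it as a field of sets over $\theta(a)$; $\theta$ is locally complete if for every $a$ this restriction is complete (sends every existing join to the union and every existing meet of a nonempty set to the intersection). *)

(* Defs.v *)
(* Partial functions on a base set X are modelled as X -> option X;
   the pair (x,y) belongs to f iff f x = Some y. *)

Inductive sym : Type :=
  | SRes
  | SComp
  | SMeet
  | SUpd
  | SPref
  | SD
  | SA.

(* Only the
   symbols in sigma matter (representations only have to respect those);
   interpretations of symbols outside sigma are arbitrary and never used. *)
Record alg : Type := Alg {
  car  :> Type;
  ores  : car -> car -> car;
  ocomp : car -> car -> car;
  omeet : car -> car -> car;
  oupd  : car -> car -> car;
  opref : car -> car -> car;
  oD    : car -> car;
  oA    : car -> car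
}.

Definition pfun (X : Type) := X -> option X.

Definition spec_res {X} (f g h : pfun X) : Prop :=
  forall x y, h x = Some y <-> (g x = Some y /\ f x = None).
Definition spec_comp {X} (f g h : pfun X) : Prop :=
  forall x z, h x = Some z <-> (exists y, f x = Some y /\ g y = Some z).
Definition spec_meet {X} (f g h : pfun X) : Prop :=
  forall x y, h x = Some y <-> (f x = Some y /\ g x = Some y).
Definition spec_upd {X} (f g h : pfun X) : Prop :=
  forall x y, h x = Some y <->
    ((f x = Some y /\ g x = None) \/ (f x <> None /\ g x = Some y)).
Definition spec_pref {X} (f g h : pfun X) : Prop :=
  forall x y, h x = Some y <-> (f x = Some y \/ (f x = None /\ g x = Some y)).
Definition spec_D {X} (f h : pfun X) : Prop :=
  forall x y, h x = Some y <-> (y = x /\ f x <> None).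
Definition spec_A {X} (f h : pfun X) : Prop :=
  forall x y, h x = Some y <-> (y = x /\ f x = None).

Definition representation (sigma : sym -> Prop) (A : alg) (X : Type)
    (theta : A -> pfun X) : Prop :=
  (forall a b : A, theta a = theta b -> a = b) /\
  (sigma SRes  -> forall a b, spec_res  (theta a) (theta b) (theta (ores  A a b))) /\
  (sigma SComp -> forall a b, spec_comp (theta a) (theta b) (theta (ocomp A a b))) /\
  (sigma SMeet -> forall a b, spec_meet (theta a) (theta b) (theta (omeet A a b))) /\
  (sigma SUpd  -> forall a b, spec_upd  (theta a) (theta b) (theta (oupd  A a b))) /\
  (sigma SPref -> forall a b, spec_pref (theta a) (theta b) (theta (opref A a b))) /\
  (sigma SD    -> forall a, spec_D (theta a) (theta (oD A a))) /\
  (sigma SA    -> forall a, spec_A (theta a) (theta (oA A a))).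

(* 0 := a |> a ;  a <| b := (a |> b) |> b ;  a <= b :<-> a <| b = a *)
Definition alg_le (A : alg) (a b : A) : Prop := ores A (ores A a b) b = a.

Definition atom (A : alg) (a : A) : Prop :=
  a <> ores A a a /\
  forall b : A, alg_le A b a -> b = ores A a a \/ b = a.

Definition atomic (A : alg) (X : Type) (theta : A -> pfun X) : Prop :=
  forall (a : A) (x y : X), theta a x = Some y ->
    exists b : A, atom A b /\ alg_le A b a /\ theta b x = Some y.

Definition is_join_below (A : alg) (a : A) (S : A -> Prop) (c : A) : Prop :=
  alg_le A c a /\ (forall s, S s -> alg_le A s c) /\
  (forall d, alg_le A d a -> (forall s, S s -> alg_le A s d) -> alg_le A c d).

Definition is_meet_below (A : alg) (a : A) (S : A -> Prop) (c : A) : Prop :=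
  alg_le A c a /\ (forall s, S s -> alg_le A c s) /\
  (forall d, alg_le A d a -> (forall s, S s -> alg_le A d s) -> alg_le A d c).

Definition locally_complete (A : alg) (X : Type) (theta : A -> pfun X) : Prop :=
  forall a : A,
    (forall (S : A -> Prop) (c : A),
        (forall s, S s -> alg_le A s a) -> is_join_below A a S c ->
        forall x y, theta c x = Some y <-> exists s, S s /\ theta s x = Some y) /\
    (forall (S : A -> Prop) (c : A),
        (forall s, S s -> alg_le A s a) -> (exists s, S s) ->
        is_meet_below A a S c ->
        forall x y, theta c x = Some y <-> forall s, S s -> theta s x = Some y).

(* Main.v *)
Require Import Defs.
From Stdlib Require Import Classical FunctionalExtensionality.

Definition sub {X} (f g : pfun X) : Prop := forall x y, f x = Some y -> g x = Some y.

Lemma resE (A : alg) (X : Type) (T : A -> pfun X)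
  (Hres : forall a b, spec_res (T a) (T b) (T (ores A a b))) a b x :
  T (ores A a b) x = match T a x with Some _ => None | None => T b x end.
Proof.
  specialize (Hres a b). destruct (T (ores A a b) x) as [v|] eqn:E.
  - apply Hres in E. destruct E as [E1 E2]. rewrite E2. auto.
  - destruct (T a x) eqn:Ea; auto. destruct (T b x) as [w|] eqn:Eb; auto.
    exfalso. assert (T (ores A a b) x = Some w) by (apply Hres; auto). congruence.
Qed.

Lemma restrE (A : alg) (X : Type) (T : A -> pfun X)
  (Hres : forall a b, spec_res (T a) (T b) (T (ores A a b))) a b x :
  T (ores A (ores A a b) b) x = match T a x with Some _ => T b x | None => None end.
Proof.
  rewrite !(resE A X T Hres). destruct (T a x); destruct (T b x); auto.
Qed.

Lemma le_iff (A : alg) (X : Type) (T : A -> pfun X)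
  (Hinj : forall a b, T a = T b -> a = b)
  (Hres : forall a b, spec_res (T a) (T b) (T (ores A a b))) a b :
  alg_le A a b <-> sub (T a) (T b).
Proof.
  unfold alg_le, sub. split.
  - intros H x y Hx. rewrite <- H in Hx. rewrite (restrE A X T Hres) in Hx.
    destruct (T a x); congruence.
  - intros H. apply Hinj. extensionality x. rewrite (restrE A X T Hres).
    destruct (T a x) eqn:E; auto.
Qed.

Lemma zero_iff (A : alg) (X : Type) (T : A -> pfun X)
  (Hinj : forall a b, T a = T b -> a = b)
  (Hres : forall a b, spec_res (T a) (T b) (T (ores A a b))) b e :
  (forall x, T b x = None) -> b = ores A e e.
Proof.
  intros H. apply Hinj. extensionality x. rewrite H, (resE A X T Hres).
  destruct (T e x) eqn:E; auto.
Qed.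

Lemma zeroE (A : alg) (X : Type) (T : A -> pfun X)
  (Hres : forall a b, spec_res (T a) (T b) (T (ores A a b))) e x :
  T (ores A e e) x = None.
Proof. rewrite (resE A X T Hres). destruct (T e x) eqn:E; auto. Qed.

Theorem proposition4p4 (sigma : sym -> Prop) (A : alg) (X : Type)
    (theta : A -> pfun X) :
  sigma SRes -> representation sigma A X theta ->
  (atomic A X theta <-> locally_complete A X theta).
Proof.
  intros Hs [Hinj [Hres _]]. specialize (Hres Hs).
  set (T := theta) in *.
  pose proof (le_iff A X T Hinj Hres) as LE.
  pose proof (restrE A X T Hres) as RE.
  pose proof (resE A X T Hres) as RS.
  pose proof (zeroE A X T Hres) as ZE.
  pose proof (zero_iff A X T Hinj Hres) as ZI.
  split.
  - intros Hat a. split.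
    + intros S c HS [Hc [Hup Hleast]] x y. split.
      * intros H. destruct (Hat c x y H) as [b [[Hb0 Hbmin] [Hbc Hbxy]]].
        destruct (classic (exists s, S s /\ T s x = Some y)) as [ok|no]; [exact ok|exfalso].
        assert (Hbc' := proj1 (LE _ _) Hbc).
        assert (Cl : forall s, S s -> forall u, T b u <> None -> T s u = None).
        { intros s Hs0 u Hu.
          assert (Hsc := proj1 (LE _ _) (Hup s Hs0)).
          assert (Hle : alg_le A (ores A (ores A b s) s) b).
          { apply LE. intros u' v'. rewrite RE. destruct (T b u') as [w|] eqn:E; [|discriminate].
            intro Hv. apply Hbc' in E. apply Hsc in Hv. congruence. }
          destruct (Hbmin _ Hle) as [Z|Z].
          - pose proof (ZE b u) as Zu. rewrite <- Z, RE in Zu.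
            destruct (T b u); [exact Zu| congruence].
          - exfalso. apply no. exists s. split; auto.
            pose proof (f_equal (fun f => T f x) Z) as Zx. simpl in Zx.
            rewrite RE, Hbxy in Zx. congruence. }
        assert (Hd : alg_le A c (ores A b c)).
        { apply Hleast.
          - apply LE. intros u v Hv. rewrite RS in Hv. destruct (T b u); [discriminate|].
            apply (proj1 (LE _ _) Hc); auto.
          - intros s Hs0. apply LE. intros u v Hv. rewrite RS.
            destruct (T b u) eqn:E.
            + rewrite (Cl s Hs0 u) in Hv; congruence.
            + apply (proj1 (LE _ _) (Hup s Hs0)); auto. }
        apply (proj1 (LE _ _)) in Hd. apply Hd in H. rewrite RS, Hbxy in H. discriminate.
      * intros [s [Hs0 Hsx]]. apply (proj1 (LE _ _) (Hup s Hs0)); auto.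
    + intros S c HS [s0 Hs0] [Hc [Hlow Hgreat]] x y. split.
      * intros H s Hs1. apply (proj1 (LE _ _) (Hlow s Hs1)); auto.
      * intros H. assert (Hax : T a x = Some y) by (apply (proj1 (LE _ _) (HS s0 Hs0)); auto).
        destruct (Hat a x y Hax) as [b [[Hb0 Hbmin] [Hba Hbxy]]].
        assert (Hba' := proj1 (LE _ _) Hba).
        assert (Hbc : alg_le A b c).
        { apply Hgreat; auto. intros s Hs1.
          assert (Hsa := proj1 (LE _ _) (HS s Hs1)).
          assert (Hle : alg_le A (ores A (ores A b s) s) b).
          { apply LE. intros u' v'. rewrite RE. destruct (T b u') as [w|] eqn:E; [|discriminate].
            intro Hv. apply Hba' in E. apply Hsa in Hv. congruence. }
          destruct (Hbmin _ Hle) as [Z|Z].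
          - exfalso. pose proof (ZE b x) as Zu. rewrite <- Z, RE, Hbxy, (H s Hs1) in Zu. discriminate.
          - apply LE. intros u v Hv. rewrite <- Z in Hv. rewrite RE in Hv.
            destruct (T b u); congruence. }
        apply (proj1 (LE _ _) Hbc); auto.
  - intros Hlc a x y H.
    apply NNPP. intro NoAt.
    set (S := fun e => exists b, alg_le A b a /\ T b x = Some y /\ e = ores A b a).
    assert (HS : forall s, S s -> alg_le A s a).
    { intros s [b [_ [_ ->]]]. apply LE. intros u v Hv. rewrite RS in Hv.
      destruct (T b u); congruence. }
    assert (HJ : is_join_below A a S a).
    { split; [apply LE; intros u v; auto|]. split; [exact HS|].
      intros d Hda Hd. assert (Hda' := proj1 (LE _ _) Hda).
      destruct (T d x) as [w|] eqn:Edx.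
      - assert (w = y) by (apply Hda' in Edx; congruence). subst w.
        assert (Hdd := proj1 (LE _ _) (Hd (ores A d a) (ex_intro _ d (conj Hda (conj Edx eq_refl))))).
        apply LE. intros u v Hv. destruct (T d u) as [v'|] eqn:E.
        + apply Hda' in E. congruence.
        + exfalso. assert (Hx : T (ores A d a) u = Some v) by (rewrite RS, E; auto).
          apply Hdd in Hx. congruence.
      - exfalso. apply NoAt. set (e := ores A d a).
        assert (Hex : T e x = Some y) by (unfold e; rewrite RS, Edx; auto).
        assert (Hea : sub (T e) (T a)).
        { intros u v Hv. unfold e in Hv. rewrite RS in Hv. destruct (T d u); congruence. }
        exists e. split; [|split; [apply LE; exact Hea| exact Hex]].
        split.
        + intro Z. pose proof (ZE e x) as Zx. rewrite <- Z in Zx. congruence.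
        + intros f Hfe. assert (Hfe' := proj1 (LE _ _) Hfe).
          assert (Hfa : alg_le A f a) by (apply LE; intros u v Hv; auto).
          destruct (T f x) as [w|] eqn:Efx.
          * right. assert (w = y) by (apply Hfe' in Efx; congruence). subst w.
            assert (Hfd := proj1 (LE _ _) (Hd (ores A f a) (ex_intro _ f (conj Hfa (conj Efx eq_refl))))).
            apply Hinj. extensionality u.
            destruct (T e u) as [v|] eqn:Eu.
            -- destruct (T f u) as [v'|] eqn:Fu.
               ++ apply Hfe' in Fu. congruence.
               ++ exfalso. pose proof Eu as Eu'. unfold e in Eu'. rewrite RS in Eu'.
                  destruct (T d u) eqn:Du; [discriminate|].
                  assert (Hx : T (ores A f a) u = Some v) by (rewrite RS, Fu; auto).
                  apply Hfd in Hx. congruence.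
            -- destruct (T f u) as [v'|] eqn:Fu; auto. apply Hfe' in Fu. congruence.
          * left. apply ZI. intro u. destruct (T f u) as [v|] eqn:Fu; auto. exfalso.
            set (g := ores A f a).
            assert (Hgx : T g x = Some y) by (unfold g; rewrite RS, Efx; auto).
            assert (Hga : alg_le A g a) by (apply LE; intros u1 v1 Hv1; unfold g in Hv1; rewrite RS in Hv1; destruct (T f u1); congruence).
            assert (Hgd := proj1 (LE _ _) (Hd (ores A g a) (ex_intro _ g (conj Hga (conj Hgx eq_refl))))).
            pose proof Fu as Eu. apply Hfe' in Eu. pose proof Eu as Eu'. unfold e in Eu'.
            rewrite RS in Eu'. destruct (T d u) eqn:Du; [discriminate|].
            assert (Hx : T (ores A g a) u = Some v).
            { rewrite RS. unfold g. rewrite RS, Fu. auto. }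
            apply Hgd in Hx. congruence. }
    destruct (proj1 (proj1 (Hlc a) S a HS HJ x y) H) as [s [[b [_ [Hbx ->]]] Hsx]].
    rewrite RS, Hbx in Hsx. discriminate.
Qed.
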